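(* Let $\ell$ be a prime, $V$ a finite-dimensional $\mathbf{Q}_\ell$-vector space, $k$ an integer with $0<k<\dim(V)$, and $g \in \mathrm{GL}(V)$. Then $\wedge^k(g)$ is unipotent if and only if there exists a $k$-th root of unity $\gamma \in \mathbf{Z}_\ell$ such that $\gamma g$ is unipotent.
   Context: $\wedge^k(g)$ denotes the induced automorphism of the $k$-th exterior power $\wedge^k(V)$. *)

(* Defs.v *)
From HB Require Import structures.
From mathcomp Require Import all_boot all_order all_algebra.
From mathcomp Require Import boolp.

Set Implicit Arguments.
Unset Strict Implicit.
Unset Printing Implicit Defensive.

Import Order.TTheory GRing.Theory Num.Theory.
Local Open Scope ring_scope.

(* The l-adic integers Z_l, built as the inverse limit of the Z / l^n Z:     *)
(* an element is a sequence (x_n)_n of integers with x_n = x_{n+1} mod l^n   *)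
(* (so that x_n is the canonical residue in [0, l^n)).  To get an integral   *)
(* domain for every l, the base is  lbase l := pdiv (maxn l 2),  which is    *)
(* equal to l whenever l is prime (this is the same trick as 'F_p).          *)

Definition lbase (l : nat) : nat := pdiv (maxn l 2).

Lemma lbase_prime l : prime (lbase l).
Proof. by apply: pdiv_prime; rewrite leq_max ltnSn orbT. Qed.

Lemma lbase_id l : prime l -> lbase l = l.
Proof.
move=> pl; rewrite /lbase (maxn_idPl (prime_gt1 pl)); exact: pdiv_id.
Qed.

Definition Qm (l n : nat) : int := ((lbase l) ^ n)%N%:Z.

Record zl (l : nat) := Zl {
  zseq : nat -> int ;
  zseqP : forall n, zseq n = (zseq n.+1 %% Qm l n)%Z }.

HB.instance Definition _ l := gen_eqMixin (zl l).
HB.instance Definition _ l := gen_choiceMixin (zl l).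

Section ZlTheory.
Variable l : nat.
Local Notation Q := (Qm l).
Local Notation q := (lbase l).

Lemma zl_eq (x y : zl l) : zseq x =1 zseq y -> x = y.
Proof.
case: x y => [x Hx] [y Hy] /= /funext E; subst y.
by rewrite (Prop_irrelevance Hx Hy).
Qed.

Lemma mod_dvdm (m D d : int) : (d %| D)%Z -> ((m %% D)%Z = m %[mod d])%Z.
Proof.
move/dvdzP => [e ->].
by rewrite [in RHS](divz_eq m (e * d)) mulrA modzMDl.
Qed.

Lemma Qm_dvd m n : (m <= n)%N -> (Q m %| Q n)%Z.
Proof. by move=> mn; rewrite dvdzE /=; apply: dvdn_exp2l. Qed.

Definition compat (f : nat -> int) := forall n, (f n = f n.+1 %[mod Q n])%Z.

Definition mkz (f : nat -> int) (H : compat f) : zl l.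
Proof.
refine (@Zl l (fun n => f n %% Q n)%Z _) => n.
by rewrite H mod_dvdm // Qm_dvd.
Defined.

Lemma zseq_mod (x : zl l) n : zseq x n = (zseq x n %% Q n)%Z.
Proof. by rewrite [in RHS]zseqP modz_mod -zseqP. Qed.

Lemma cadd (x y : zl l) : compat (fun n => zseq x n + zseq y n).
Proof. by move=> n; rewrite (zseqP x n) (zseqP y n) modzDm. Qed.
Lemma copp (x : zl l) : compat (fun n => - zseq x n).
Proof. by move=> n; rewrite (zseqP x n) modzNm. Qed.
Lemma cmul (x y : zl l) : compat (fun n => zseq x n * zseq y n).
Proof. by move=> n; rewrite (zseqP x n) (zseqP y n) modzMm. Qed.
Lemma ccst (c : int) : compat (fun => c).
Proof. by []. Qed.

Definition zadd x y := mkz (cadd x y).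
Definition zopp x := mkz (copp x).
Definition zmul x y := mkz (cmul x y).
Definition zzero := mkz (ccst 0).
Definition zone := mkz (ccst 1).

Lemma zaddA : associative zadd.
Proof. by move=> x y z; apply: zl_eq => n /=; rewrite modzDml modzDmr addrA. Qed.
Lemma zaddC : commutative zadd.
Proof. by move=> x y; apply: zl_eq => n /=; rewrite addrC. Qed.
Lemma zadd0 : left_id zzero zadd.
Proof. by move=> x; apply: zl_eq => n /=; rewrite modzDml add0r -zseq_mod. Qed.
Lemma zaddN : left_inverse zzero zopp zadd.
Proof. by move=> x; apply: zl_eq => n /=; rewrite modzDml addNr. Qed.

HB.instance Definition _ := GRing.isZmodule.Build (zl l) zaddA zaddC zadd0 zaddN.

Lemma zmulA : associative zmul.
Proof. by move=> x y z; apply: zl_eq => n /=; rewrite modzMml modzMmr mulrA. Qed.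
Lemma zmulC : commutative zmul.
Proof. by move=> x y; apply: zl_eq => n /=; rewrite mulrC. Qed.
Lemma zmul1 : left_id zone zmul.
Proof. by move=> x; apply: zl_eq => n /=; rewrite modzMml mul1r -zseq_mod. Qed.
Lemma zmulDl : left_distributive zmul (@GRing.add (zl l)).
Proof.
by move=> x y z; apply: zl_eq => n /=; rewrite modzMml modzDm mulrDl.
Qed.

Lemma q_gt1 : (1 < q)%N.
Proof. exact: prime_gt1 (lbase_prime l). Qed.

Lemma zone_neq0 : zone != (0 : zl l).
Proof.
apply/eqP => /(congr1 (fun x => zseq x 1)) /=.
rewrite mod0z modz_small //.
by rewrite /Qm expn1 ltz_nat q_gt1.
Qed.

HB.instance Definition _ :=
  GRing.Zmodule_isComNzRing.Build (zl l) zmulA zmulC zmul1 zmulDl zone_neq0.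

Definition zunit : {pred zl l} := fun x => `[< exists y, y * x = 1 >].
Definition zinv (x : zl l) : zl l :=
  match pselect (exists y, y * x = 1) with
  | left H => projT1 (cid H)
  | right _ => x
  end.

Lemma zmulV : {in zunit, left_inverse 1 zinv *%R}.
Proof.
move=> x /asboolP H; rewrite /zinv; case: pselect => // H'.
exact: (projT2 (cid H')).
Qed.

Lemma zunitPl x y : y * x = 1 -> zunit x.
Proof. by move=> H; apply/asboolP; exists y. Qed.

Lemma zinv_out : {in [predC zunit], zinv =1 id}.
Proof.
move=> x; rewrite inE /= => /asboolPn H; rewrite /zinv.
by case: pselect.
Qed.

HB.instance Definition _ :=
  GRing.ComNzRing_hasMulInverse.Build (zl l) zmulV zunitPl zinv_out.

Lemma zl_stab (x : zl l) m n : (m <= n)%N -> zseq x m = (zseq x n %% Q m)%Z.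
Proof.
move=> /subnK <-; elim: (n - m)%N => [|d IH]; first by rewrite add0n -zseq_mod.
by rewrite IH addSn (zseqP x (d + m)) mod_dvdm // Qm_dvd // leq_addl.
Qed.

Lemma dvd_stab (x : zl l) m n e : (m <= n)%N -> (e <= m)%N ->
  (Q e %| zseq x n)%Z = (Q e %| zseq x m)%Z.
Proof.
move=> mn em; rewrite (zl_stab x mn).
rewrite [in LHS](divz_eq (zseq x n) (Q m)) rpredDl //.
by apply: dvdz_mull; apply: Qm_dvd.
Qed.

Lemma zseq0 n : zseq (0 : zl l) n = 0.
Proof. by rewrite /= mod0z. Qed.

Lemma zl_val (x : zl l) : x != 0 -> exists m i, (i < m)%N /\
  forall n, (m <= n)%N -> (Q i %| zseq x n)%Z /\ ~~ (Q i.+1 %| zseq x n)%Z.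
Proof.
move=> nx.
have [m xm] : exists m, zseq x m != 0.
  case: (pselect (exists m, zseq x m != 0)) => // H.
  move/negP: nx; case; apply/eqP; apply: zl_eq => k; rewrite zseq0.
  by apply/eqP/negPn/negP => hk; apply: H; exists k.
have pq := lbase_prime l.
set b := `|zseq x m|%N.
have b0 : (0 < b)%N by rewrite absz_gt0.
have blt : (b < q ^ m)%N.
  have ge0 : 0 <= zseq x m by rewrite zseq_mod modz_ge0 // gt_eqF // /Qm ltz_nat expn_gt0 prime_gt0.
  have lt : zseq x m < Q m by rewrite zseq_mod ltz_pmod // /Qm ltz_nat expn_gt0 prime_gt0.
  move: ge0 lt; rewrite /b /Qm; case: (zseq x m) => // p _ /= h.
exists m, (logn q b); split.
  rewrite -(ltn_exp2l _ _ q_gt1); apply: leq_ltn_trans blt.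
  exact: dvdn_leq b0 (pfactor_dvdnn q b).
move=> n mn.
have im : (logn q b < m)%N.
  rewrite -(ltn_exp2l _ _ q_gt1); apply: leq_ltn_trans blt.
  exact: dvdn_leq b0 (pfactor_dvdnn q b).
rewrite !(dvd_stab x mn) //; last exact: ltnW.
by rewrite !dvdzE /= pfactor_dvdnn pfactor_dvdn // ltnn.
Qed.

Lemma logn_eq p a i : prime p -> (p ^ i %| a)%N -> ~~ (p ^ i.+1 %| a)%N ->
  logn p a = i.
Proof.
move=> pp h1 h2.
have a0 : (0 < a)%N by case: a h2 {h1} => //; rewrite dvdn0.
by apply/eqP; rewrite eqn_leq leqNgt -!(pfactor_dvdn _ _ a0) // h1 h2.
Qed.

Lemma zl_dom : GRing.integral_domain_axiom (zl l).
Proof.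
move=> x y xy0.
have [x0|nx] := eqVneq x 0; first by apply/orP; left; apply/eqP.
have [y0|ny] := eqVneq y 0; first by apply/orP; right; apply/eqP.
exfalso.
have pq := lbase_prime l.
have [m [i [im Hx]]] := zl_val nx.
have [m' [j [jm Hy]]] := zl_val ny.
set n := (m + m')%N.
have [xi xi1] := Hx n (leq_addr _ _).
have [yj yj1] := Hy n (leq_addl _ _).
have : (Q n %| zseq x n * zseq y n)%Z.
  apply/dvdz_mod0P; move: (congr1 (fun z => zseq z n) xy0) => /=.
  by rewrite mod0z.
move: xi xi1 yj yj1; rewrite !dvdzE /= abszM.
set a := `|zseq x n|%N; set c := `|zseq y n|%N => xi xi1 yj yj1 d.
have la := logn_eq pq xi xi1.
have lc := logn_eq pq yj yj1.
have a0 : (0 < a)%N by case: a xi1 {xi d la} => //; rewrite dvdn0.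
have c0 : (0 < c)%N by case: c yj1 {yj d lc} => //; rewrite dvdn0.
move: d; rewrite pfactor_dvdn ?muln_gt0 ?a0 ?c0 // lognM // la lc => d.
have : (i + j < n)%N by rewrite /n -addSn leq_add // ltnW.
by rewrite ltnNge d.
Qed.

End ZlTheory.

HB.instance Definition _ l := GRing.ComUnitRing_isIntegral.Build (zl l) (@zl_dom l).

Definition Ql (l : nat) := {fraction (zl l)}.

Definition zl_to_ql (l : nat) (x : zl l) : Ql l := @FracField.tofrac (zl l) x.

(* Exterior powers of a matrix.  For g in 'M_n (a linear map of V = R^n in   *)
(* the standard basis e_1..e_n), the matrix of  wedge^k(g)  in the basis     *)
(* e_I = e_{i_1} /\ ... /\ e_{i_k}  (I = {i_1 < ... < i_k} a k-subset) is    *)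
(* the k-th compound matrix, whose (I, J) entry is the k x k minor of g with *)
(* rows I and columns J (both taken in increasing order).                    *)

Definition ksub (n k : nat) := {S : {set 'I_n} | #|S| == k}.

(* the increasing enumeration 'I_k -> 'I_n of a k-subset *)
Definition kenum n k (S : ksub n k) (a : 'I_k) : 'I_n :=
  @enum_val _ (mem (val S)) (cast_ord (esym (eqP (valP S))) a).

Definition wedge (R : comNzRingType) (n k : nat) (g : 'M[R]_n) :
    'M[R]_#|{: ksub n k}| :=
  \matrix_(I, J) \det (\matrix_(a < k, b < k)
      g (kenum (enum_val I) a) (kenum (enum_val J) b)).

Definition unipotent (R : pzRingType) (m : nat) (A : 'M[R]_m) : Prop :=
  exists N : nat, (A - 1%:M) ^+ N = 0.

(* Main.v *)
Require Import Defs.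
From HB Require Import structures.
From mathcomp Require Import all_boot all_order all_algebra fingroup perm qpoly.
From mathcomp Require Import qfpoly.
From mathcomp Require Import boolp ring zify.
Set Implicit Arguments.
Unset Strict Implicit.
Unset Printing Implicit Defensive.
Import Order.TTheory GRing.Theory Num.Theory.
Local Open Scope ring_scope.

Section Kenum.
Variables n k : nat.
Implicit Types S : ksub n k.

Lemma kenum_inj S : injective (@kenum n k S).
Proof. by move=> a b /enum_val_inj /cast_ord_inj. Qed.

Lemma kenum_mem S a : kenum S a \in val S.
Proof. exact: enum_valP. Qed.

Lemma kenum_surj S x : x \in val S -> exists a, kenum S a = x.
Proof.
move=> Hx; exists (cast_ord (eqP (valP S)) (enum_rank_in Hx x)).
by rewrite /kenum cast_ordK enum_rankK_in.
Qed.

Lemma kenum_sorted S : sorted ltn (map val (enum (mem (val S)))).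
Proof.
rewrite -[enum _](eq_filter (mem_enum _)).
rewrite -(eq_filter (mem_map val_inj _)) -filter_map.
by rewrite (sorted_filter ltn_trans) // unlock val_ord_enum iota_ltn_sorted.
Qed.

Lemma kenum_mono S (a b : 'I_k) : (a < b)%N -> (kenum S a < kenum S b)%N.
Proof.
move=> ab; rewrite /kenum !(enum_val_nth (kenum S a)).
set s := enum _.
have hs : size s = k by rewrite /s -cardE; exact: (eqP (valP S)).
rewrite -!(nth_map _ 0%N val) ?hs //.
apply: (sorted_ltn_nth ltn_trans) => //; first exact: kenum_sorted.
all: by rewrite ?inE ?size_map ?hs /= ?ltn_ord.
Qed.
End Kenum.

Section CB.
Variable R : comPzRingType.
Variables k n : nat.

Definition Phi (p : ksub n k * 'S_k) : {ffun 'I_k -> 'I_n} :=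
  [ffun i => kenum p.1 (p.2 i)].

Lemma Phi_inj : injective Phi.
Proof.
move=> [S t] [S' t'] E.
have ES : S = S'.
  apply: val_inj; apply/setP => x.
  apply/idP/idP => Hx.
    have [a <-] := kenum_surj Hx.
    have := congr1 (fun f : {ffun 'I_k -> 'I_n} => f (t^-1 a)%g) E; rewrite !ffunE /= permKV => ->.
    exact: kenum_mem.
  have [a <-] := kenum_surj Hx.
  have := congr1 (fun f : {ffun 'I_k -> 'I_n} => f (t'^-1 a)%g) E; rewrite !ffunE /= permKV => <-.
  exact: kenum_mem.
subst S'; congr (_, _); apply/permP => i.
by have := congr1 (fun f : {ffun 'I_k -> 'I_n} => f i) E; rewrite !ffunE /= => /kenum_inj.
Qed.

Lemma Phi_injective p : injectiveb (Phi p).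
Proof.
by apply/injectiveP => i j; rewrite !ffunE => /kenum_inj /perm_inj.
Qed.

Lemma Phi_surj (f : {ffun 'I_k -> 'I_n}) : injectiveb f -> f \in Phi @: setT.
Proof.
move/injectiveP => fi.
have cS : #|[set f i | i in 'I_k]| == k by rewrite card_imset // card_ord.
pose S : ksub n k := exist (fun A : {set 'I_n} => #|A| == k) _ cS.
have mS i : f i \in val S by rewrite /= imset_f.
pose tf i := odflt i [pick a | kenum S a == f i].
have tfE i : kenum S (tf i) = f i.
  rewrite /tf; case: pickP => [a /eqP //|H].
  have [a Ha] := kenum_surj (mS i).
  by move: (H a); rewrite Ha eqxx.
have tfi : injective tf.
  by move=> i j E; apply: fi; rewrite -!tfE E.
apply/imsetP; exists (S, perm tfi) => //.
by apply/ffunP => i; rewrite ffunE /= permE tfE.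
Qed.

Lemma cauchy_binet (C : 'M[R]_(k, n)) (D : 'M[R]_(n, k)) :
  \det (C *m D) = \sum_(S : ksub n k)
     \det (colsub (kenum S) C) * \det (rowsub (kenum S) D).
Proof.
pose F := {ffun 'I_k -> 'I_n}.
transitivity (\sum_(f : F) (\prod_i C i (f i)) * \det (\matrix_(i, j) D (f i) j)).
  transitivity (\sum_(s : 'S_k) \sum_(f : F)
      (-1) ^+ s * \prod_i (C i (f i) * D (f i) (s i))).
    apply: eq_bigr => s _; rewrite -big_distrr /=; congr (_ * _).
    rewrite -(bigA_distr_bigA (fun i j => C i j * D j (s i))) /=.
    by apply: eq_bigr => i _; rewrite mxE.
  rewrite exchange_big; apply: eq_bigr => f _ /=.
  rewrite big_distrr; apply: eq_bigr => s _ /=.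
  rewrite big_split /= mulrCA; congr (_ * (_ * _)).
  by apply: eq_bigr => i _; rewrite mxE.
rewrite (bigID (fun f : F => injectiveb f)) /= [X in _ + X]big1 ?addr0; last first.
  move=> f /injectivePn [i1 [i2 Di12 Ef12]].
  by rewrite (determinant_alternate Di12) ?mulr0 //= => j; rewrite !mxE Ef12.
transitivity (\sum_(f in Phi @: setT) (\prod_i C i (f i)) * \det (\matrix_(i, j) D (f i) j)).
  apply: eq_bigl => f; apply/idP/idP; first exact: Phi_surj.
  by move/imsetP => [p _ ->]; exact: Phi_injective.
rewrite big_imset /=; last by move=> p q _ _; exact: Phi_inj.
rewrite (eq_bigl xpredT) => [|p]; last by rewrite inE.
have -> : \sum_(S : ksub n k) \det (colsub (kenum S) C) * \det (rowsub (kenum S) D)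
   = \sum_(S : ksub n k) \sum_(t : 'S_k) (\prod_i C i (Phi (S, t) i)) *
      \det (\matrix_(i, j) D (Phi (S, t) i) j).
  apply: eq_bigr => S _.
  rewrite big_distrl /=; apply: eq_bigr => t _.
  have -> : \matrix_(i, j) D (Phi (S, t) i) j = row_perm t (rowsub (kenum S) D).
    by apply/matrixP => i j; rewrite !mxE ffunE.
  rewrite row_permE det_mulmx det_perm.
  rewrite -mulrA mulrCA; congr (_ * (_ * _)).
  by apply: eq_bigr => i _; rewrite ffunE mxE.
rewrite pair_big /=; apply: eq_bigr => -[S t] _ //.
Qed.
End CB.

Lemma kenum_im n k (S : ksub n k) : val S = [set kenum S a | a in 'I_k].
Proof.
apply/setP => x; apply/idP/idP => [Hx|/imsetP [a _ ->]]; last exact: kenum_mem.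
by have [a <-] := kenum_surj Hx; rewrite imset_f.
Qed.

Lemma kenum_eq n k (S S' : ksub n k) : (forall a, kenum S a = kenum S' a) -> S = S'.
Proof.
move=> E; apply: val_inj; rewrite !kenum_im; apply/setP => x.
by apply/imsetP/imsetP => -[a _ ->]; exists a; rewrite ?E.
Qed.

Section WedgeRing.
Variable R : comNzRingType.
Variables n k : nat.
Local Notation W := (@wedge _ n k).

Lemma wedge_mul (A B : 'M[R]_n) : W (A *m B) = W A *m W B.
Proof.
apply/matrixP => I J; rewrite !mxE.
set C := \matrix_(a < k, j < n) A (kenum (enum_val I) a) j.
set D := \matrix_(j < n, b < k) B j (kenum (enum_val J) b).
have -> : \matrix_(a < k, b < k) (A *m B) (kenum (enum_val I) a) (kenum (enum_val J) b)
   = C *m D.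
  by apply/matrixP => a b; rewrite !mxE; apply: eq_bigr => j _; rewrite !mxE.
rewrite cauchy_binet.
rewrite (reindex (enum_val : 'I_#|{: ksub n k}| -> ksub n k)) /=; last first.
  by exists enum_rank => x _; [exact: enum_valK | exact: enum_rankK].
apply: eq_bigr => K _; rewrite !mxE.
congr (_ * _); congr (\det _).
  by apply/matrixP => a b; rewrite !mxE.
by apply/matrixP => a b; rewrite !mxE.
Qed.

Lemma wedge1 : W (1%:M : 'M[R]_n) = 1%:M.
Proof.
apply/matrixP => I J; rewrite !mxE.
have [<-|IJ] := eqVneq I J.
  have -> : \matrix_(a < k, b < k) (1%:M : 'M[R]_n) (kenum (enum_val I) a) (kenum (enum_val I) b)
     = 1%:M.
    by apply/matrixP => a b; rewrite !mxE (inj_eq (@kenum_inj _ _ _)).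
  by rewrite det1.
set S := enum_val I; set S' := enum_val J.
have SS' : S != S' by rewrite (inj_eq enum_val_inj).
have [x xS xS'] : exists2 x, x \in val S & x \notin val S'.
  apply/exists_inP; apply: contraR SS' => /exists_inPn H.
  apply/eqP; apply: val_inj; apply/eqP; rewrite eqEcard.
  rewrite (eqP (valP S)) (eqP (valP S')) leqnn andbT.
  by apply/subsetP => y /H /negPn.
have [a xa] := kenum_surj xS.
rewrite (expand_det_row _ a) big1 // => b _; rewrite !mxE xa.
case: eqP => [E|]; last by rewrite mul0r.
by case/negP: xS'; rewrite E kenum_mem.
Qed.

Lemma wedge_map (R' : comNzRingType) (f : {rmorphism R -> R'}) (A : 'M[R]_n) :
  map_mx f (W A) = W (map_mx f A).
Proof.
apply/matrixP => I J; rewrite !mxE -det_map_mx; congr (\det _).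
by apply/matrixP => a b; rewrite !mxE.
Qed.

End WedgeRing.

Section WedgeUnit.
Variable R : comUnitRingType.
Variables n k : nat.
Local Notation W := (@wedge _ n k).

Lemma wedge_conj (P A : 'M[R]_n) : P \in unitmx ->
  W P \in unitmx /\ W (P *m A *m invmx P) = W P *m W A *m invmx (W P).
Proof.
move=> Pu.
have H1 : W P *m W (invmx P) = 1%:M by rewrite -wedge_mul mulmxV // wedge1.
have [Wu _] := mulmx1_unit H1.
split => //.
have -> : invmx (W P) = W (invmx P).
  by rewrite -[RHS]mul1mx -(mulVmx Wu) -mulmxA H1 mulmx1.
by rewrite !wedge_mul.
Qed.
End WedgeUnit.

Lemma eq_sym_neq (T : eqType) (x y : T) : x != y -> y != x.
Proof. by rewrite eq_sym. Qed.

Lemma sum_neq0 (R : nmodType) (I : finType) (F : I -> R) :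
  \sum_i F i != 0 -> exists i, F i != 0.
Proof.
move=> H; apply/existsP; apply: contraR H => /existsPn H.
by apply/eqP; apply: big1 => i _; apply/eqP/negPn.
Qed.

Section Wtrig.
Variable R : comNzRingType.
Variable m : nat.
Variable w : 'I_m -> nat.

Definition wtrig (M : 'M[R]_m) :=
  forall i j, i != j -> M i j != 0 -> (w j < w i)%N.

Lemma wtrig_le M i j : wtrig M -> M i j != 0 -> (i == j) || (w j < w i)%N.
Proof. by move=> H nz; case: eqVneq => //= ij; exact: H. Qed.

Lemma wtrig_mul A B : wtrig A -> wtrig B -> wtrig (A *m B).
Proof.
move=> HA HB i j ij; rewrite mxE => /sum_neq0 [x].
have [Ax0|Ax] := eqVneq (A i x) 0; first by rewrite Ax0 mul0r eqxx.
have [Bx0|Bx] := eqVneq (B x j) 0; first by rewrite Bx0 mulr0 eqxx.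
move=> _.
move/orP: (wtrig_le HA Ax) => [/eqP ix | h1]; move/orP: (wtrig_le HB Bx) => [/eqP xj | h2].
- by rewrite ix xj eqxx in ij.
- by rewrite ix.
- by rewrite -xj.
- exact: ltn_trans h2 h1.
Qed.

Lemma wtrig_diag A B i : wtrig A -> wtrig B -> (A *m B) i i = A i i * B i i.
Proof.
move=> HA HB; rewrite mxE (bigD1 i) //= big1 ?addr0 // => x xi.
have [Ax0|Ax] := eqVneq (A i x) 0; first by rewrite Ax0 mul0r.
have [Bx0|Bx] := eqVneq (B x i) 0; first by rewrite Bx0 mulr0.
have h1 := HB x i xi Bx.
have h2 := HA i x (eq_sym_neq xi) Ax.
by have := ltn_trans h1 h2; rewrite ltnn.
Qed.

Lemma wtrig1 : wtrig 1%:M.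
Proof. by move=> i j ij; rewrite mxE (negPf ij) eqxx. Qed.

Lemma wtrigB A B : wtrig A -> wtrig B -> wtrig (A - B).
Proof.
move=> HA HB i j ij; rewrite !mxE.
have [Ax0|Ax] := eqVneq (A i j) 0; first by rewrite Ax0 sub0r oppr_eq0; exact: HB.
by move=> _; exact: HA.
Qed.

Lemma wtrigX A p : wtrig A -> wtrig (A ^+ p) /\ forall i, (A ^+ p) i i = A i i ^+ p.
Proof.
move=> HA; elim: p => [|p [IH1 IH2]].
  by split; [exact: wtrig1 | move=> i; rewrite expr0 !mxE eqxx].
rewrite exprSr -mulmxE; split; first exact: wtrig_mul.
by move=> i; rewrite wtrig_diag // IH2 exprSr.
Qed.

Lemma wtrig_nilp N B : wtrig N -> (forall i, N i i = 0) ->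
  (forall i, (w i < B)%N) -> N ^+ B = 0.
Proof.
move=> HN H0 HB.
suff H p : forall i j, (N ^+ p) i j != 0 -> (w j + p <= w i)%N.
  apply/matrixP => i j; rewrite mxE; apply/eqP/negP => /negP /H.
  by rewrite leqNgt (leq_trans (HB i)) ?leq_addl.
elim: p => [|p IH] i j.
  rewrite expr0 mxE addn0.
  by case: (i =P j) => [->|_]; rewrite ?leqnn ?eqxx.
rewrite exprSr -mulmxE mxE => /sum_neq0 [x].
have [Ax0|Ax] := eqVneq ((N ^+ p) i x) 0; first by rewrite Ax0 mul0r eqxx.
have [Bx0|Bx] := eqVneq (N x j) 0; first by rewrite Bx0 mulr0 eqxx.
move=> _; have h1 := IH _ _ Ax.
have xj : x != j by apply: contraNneq Bx => ->; rewrite H0.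
have h2 := HN _ _ xj Bx.
by rewrite addnS; apply: leq_trans h1; rewrite ltn_add2r.
Qed.

End Wtrig.

Lemma unipotent_wtrig (R : idomainType) m (w : 'I_m -> nat) (A : 'M[R]_m) :
  wtrig w A -> (unipotent A <-> forall i, A i i = 1).
Proof.
move=> HA; have HB : wtrig w (A - 1%:M) by apply: wtrigB => //; exact: wtrig1.
split.
  move=> [N HN] i; have [_ /(_ i)] := wtrigX N HB.
  rewrite HN !mxE eqxx => /esym/eqP; rewrite expf_eq0 => /andP [_].
  by rewrite subr_eq0 => /eqP.
move=> H1; exists (\big[maxn/0%N]_i (w i)).+1.
apply: (wtrig_nilp HB) => [i|i]; first by rewrite !mxE eqxx H1 subrr.
by rewrite ltnS; apply: (@leq_bigmax _ w).
Qed.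

Lemma unipotent_conj (R : comUnitRingType) m (P A : 'M[R]_m) :
  P \in unitmx -> unipotent A -> unipotent (P *m A *m invmx P).
Proof.
move=> Pu [N HN]; exists N.
have -> : P *m A *m invmx P - 1%:M = P *m (A - 1%:M) *m invmx P.
  by rewrite mulmxBr mulmxBl mulmx1 mulmxV.
suff -> : forall p, (P *m (A - 1%:M) *m invmx P) ^+ p = P *m (A - 1%:M) ^+ p *m invmx P.
  by rewrite HN mulmx0 mul0mx.
elim => [|p IH]; first by rewrite !expr0 mulmx1 mulmxV.
rewrite exprSr IH -mulmxE !mulmxA mulmxKV // -!mulmxA; congr (_ *m _).
by rewrite exprSr -mulmxE mulmxA.
Qed.

Lemma unipotent_conjE (R : comUnitRingType) m (P A : 'M[R]_m) :
  P \in unitmx -> unipotent (P *m A *m invmx P) <-> unipotent A.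
Proof.
move=> Pu; split; last exact: unipotent_conj.
have Pu' : invmx P \in unitmx by rewrite unitmx_inv.
move=> /(unipotent_conj Pu'); rewrite invmxK.
by rewrite !mulmxA mulVmx // mul1mx -mulmxA mulVmx // mulmx1.
Qed.

Lemma unipotent_map (F L : fieldType) (f : {rmorphism F -> L}) m (A : 'M[F]_m) :
  unipotent (map_mx f A) <-> unipotent A.
Proof.
have E N : (map_mx f A - 1%:M) ^+ N = map_mx f ((A - 1%:M) ^+ N).
  elim: N => [|N IH]; first by rewrite !expr0 map_mx1.
  by rewrite !exprSr IH -!mulmxE map_mxM map_mxB map_mx1.
split => -[N HN]; exists N.
  by apply/eqP; rewrite -(map_mx_eq0 f) -E HN.
by rewrite E HN map_mx0.
Qed.

Lemma kenum_le n k (S : ksub n k) (a b : 'I_k) : (a <= b)%N -> (kenum S a <= kenum S b)%N.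
Proof.
rewrite leq_eqVlt => /orP [/eqP ab|ab]; last by rewrite ltnW // kenum_mono.
by rewrite (val_inj ab).
Qed.

Lemma sum_kenum n k (S : ksub n k) (F : 'I_n -> nat) :
  (\sum_(x in val S) F x = \sum_(a < k) F (kenum S a))%N.
Proof.
rewrite [in LHS]kenum_im big_imset /=; last by move=> a b _ _; exact: kenum_inj.
by apply: eq_bigl => a; rewrite inE.
Qed.

Lemma prod_kenum (R : comNzRingType) n k (S : ksub n k) (F : 'I_n -> R) :
  \prod_(x in val S) F x = \prod_(a < k) F (kenum S a).
Proof.
rewrite [in LHS]kenum_im big_imset /=; last by move=> a b _ _; exact: kenum_inj.
by apply: eq_bigl => a; rewrite inE.
Qed.

Definition phi n k (I : 'I_#|{: ksub n k}|) : nat :=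
  (\sum_(x in val (enum_val I)) (x : nat))%N.

Section WedgeTrig.
Variable R : comNzRingType.
Variables n k : nat.
Variable T : 'M[R]_n.
Hypothesis HT : is_trig_mx T.

Lemma wedge_trig_diag I :
  wedge k T I I = \prod_(x in val (enum_val I)) T x x.
Proof.
rewrite mxE det_trig ?prod_kenum; first by apply: eq_bigr => a _; rewrite mxE.
apply/is_trig_mxP => a b ab; rewrite mxE.
by move/is_trig_mxP: HT; apply; exact: kenum_mono.
Qed.

Lemma wedge_trig : wtrig (@phi n k) (wedge k T).
Proof.
move=> I J IJ; rewrite mxE => nz.
set S := enum_val I in nz *; set S' := enum_val J in nz *.
have le a : (kenum S' a <= kenum S a)%N.
  rewrite leqNgt; apply/negP => lt; case/eqP: nz.
  apply: big1 => s _.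
  have /existsP [a1 /andP [a1a0 a0s]] : [exists a1 : 'I_k, (a1 <= a)%N && (a <= s a1)%N].
    apply: contraT; rewrite negb_exists => /forallP H.
    have a0k : (a.+1 <= k)%N := ltn_ord a.
    have Hg (x : 'I_a.+1) : (s (widen_ord a0k x) < a)%N.
      have := H (widen_ord a0k x); rewrite /= -ltnS ltn_ord /= -ltnNge.
      by [].
    pose f x : 'I_a := Ordinal (Hg x).
    have fi : injective f.
      move=> x y /(congr1 val) /= /val_inj /perm_inj /(congr1 val) /= E.
      exact: val_inj.
    by have := leq_card f fi; rewrite !card_ord ltnn.
  rewrite (bigD1 a1) //= mxE.
  have -> : T (kenum S a1) (kenum S' (s a1)) = 0.
    move/is_trig_mxP: HT; apply.
    by apply: leq_ltn_trans (kenum_le S a1a0) (leq_trans lt (kenum_le S' a0s)).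
  by rewrite mul0r mulr0.
rewrite /phi !sum_kenum -/S -/S'.
have SS' : S != S' by rewrite (inj_eq enum_val_inj).
have [a lta] : exists a, (kenum S' a < kenum S a)%N.
  apply/existsP; apply: contraR SS' => /existsPn H; apply/eqP/kenum_eq => a.
  apply/val_inj/eqP; rewrite eqn_leq le andbT leqNgt; exact: H.
rewrite (bigD1 a) //= [(\sum_(a0 < k) kenum S a0)%N](bigD1 a) //= -addSn.
by apply: leq_add => //; apply: leq_sum => b _.
Qed.
End WedgeTrig.

Lemma exists_subset n (A : {set 'I_n}) m : (m <= #|A|)%N ->
  exists U : {set 'I_n}, U \subset A /\ #|U| = m.
Proof.
move/card_geqP => [s [us ss sA]].
exists [set x in s]; split; last by rewrite cardsE (card_uniqP us).
by apply/subsetP => x; rewrite inE => /sA.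
Qed.

Section Trig.
Variable F : fieldType.

Lemma inv_uniq n (A B : 'M[F]_n) : A *m B = 1%:M -> invmx A = B.
Proof.
move=> H; have [Au _] := mulmx1_unit H.
by rewrite -[invmx A]mulmx1 -H mulmxA mulVmx // mul1mx.
Qed.

Lemma char_poly_conj n (P A : 'M[F]_n) : P \in unitmx ->
  char_poly (P *m A *m invmx P) = char_poly A.
Proof.
move=> Pu; rewrite /char_poly.
pose mP := map_mx (@polyC F) P; pose mPi := map_mx (@polyC F) (invmx P).
have PPi : mP *m mPi = 1%:M by rewrite -map_mxM mulmxV // map_mx1.
have -> : char_poly_mx (P *m A *m invmx P) = mP *m char_poly_mx A *m mPi.
  rewrite /char_poly_mx mulmxBr mulmxBl !map_mxM mul_mx_scalar -scalemxAl PPi.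
  by rewrite scalemx1.
by rewrite !det_mulmx mulrAC -det_mulmx PPi det1 mul1r.
Qed.


Lemma char_poly_lblock n' a (c : 'M[F]_(n', 1)) (D : 'M[F]_n') :
  char_poly (block_mx (a%:M : 'M_1) 0 c D) = ('X - a%:P) * char_poly D.
Proof.
rewrite /char_poly /char_poly_mx map_block_mx (scalar_mx_block 1 n') map_mx0.
rewrite opp_block_mx add_block_mx oppr0 addr0 det_lblock det_mx11.
by rewrite !mxE /= mulr1n.
Qed.

Lemma trig_split n (A : 'M[F]_n) (rs : seq F) :
  char_poly A = \prod_(x <- rs) ('X - x%:P) ->
  exists2 P, P \in unitmx & is_trig_mx (P *m A *m invmx P).
Proof.
elim: n A rs => [|n' IH] A rs Hc.
  by exists 1%:M; [exact: unitmx1 | apply/is_trig_mxP => -[]].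
case: rs Hc => [|a rs'] Hc.
  by have := size_char_poly A; rewrite Hc big_nil size_poly1.
have ra : eigenvalue A a by rewrite eigenvalue_root_char Hc root_prod_XsubC mem_head.
have [v vA vn0] := eigenvalueP ra.
have e : \rank (v^C)%MS = n' by rewrite mxrank_compl rank_rV vn0 subn1.
pose B : 'M[F]_(n', n'.+1) := castmx (e, erefl) (row_base (v^C)%MS).
pose P0 : 'M[F]_(1 + n') := col_mx v B.
have P0u : P0 \in unitmx.
  have E : (P0 :=: v + v^C)%MS.
    rewrite /P0; apply: eqmx_trans (eqmx_sym (addsmxE _ _)) _.
    apply: adds_eqmx => //; exact: eqmx_trans (eqmx_cast _ _) (eq_row_base _).
  by rewrite -row_full_unit /row_full E; exact: addsmx_compl_full.
pose A1 : 'M[F]_(1 + n') := P0 *m A *m invmx P0.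
have h2 : v *m invmx P0 = row_mx (1%:M : 'M_1) 0.
  have := mulmxV P0u; rewrite /P0 mul_col_mx (scalar_mx_block 1 n') => /(congr1 usubmx).
  by rewrite col_mxKu block_mxEv col_mxKu.
have U : usubmx A1 = row_mx (a%:M : 'M_1) 0.
  by rewrite /A1 /P0 !mul_col_mx col_mxKu vA -scalemxAl h2 scale_row_mx scalemx1 scaler0.
have UL : ulsubmx A1 = a%:M by rewrite -[ulsubmx A1]/(lsubmx (usubmx A1)) U row_mxKl.
have UR : ursubmx A1 = 0 by rewrite -[ursubmx A1]/(rsubmx (usubmx A1)) U row_mxKr.
set c := dlsubmx A1; set D := drsubmx A1.
have A1E : A1 = block_mx a%:M 0 c D by rewrite -[A1]submxK UL UR.
have HD : char_poly D = \prod_(x <- rs') ('X - x%:P).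
  have := char_poly_conj A P0u; rewrite -/A1 A1E char_poly_lblock Hc big_cons.
  by move/(mulfI (negbT (polyXsubC_eq0 a))).
have [P' P'u P'trig] := IH D rs' HD.
pose Q : 'M[F]_(1 + n') := block_mx 1%:M 0 0 P'.
pose Qi : 'M[F]_(1 + n') := block_mx 1%:M 0 0 (invmx P').
have QQi : Q *m Qi = 1%:M.
  rewrite mulmx_block !mulmx0 !mul0mx !mulmx1 !addr0 add0r mulmxV //.
  by rewrite -scalar_mx_block.
have [Qu _] := mulmx1_unit QQi.
exists (Q *m P0); first by rewrite unitmx_mul Qu P0u.
have -> : invmx (Q *m P0) = invmx P0 *m Qi.
  by apply: inv_uniq; rewrite -!mulmxA (mulmxA P0) mulmxV // mul1mx QQi.
have -> : Q *m P0 *m A *m (invmx P0 *m Qi) = Q *m A1 *m Qi.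
  by rewrite /A1 !mulmxA.
rewrite A1E /Q /Qi !mulmx_block !mulmx0 !mul0mx !mulmx1 !mul1mx !addr0 !add0r.
rewrite mul0mx; change (is_true (@is_trig_mx _ (1 + n') (1 + n') (block_mx (a%:M : 'M_1) 0 (P' *m c) (P' *m D *m invmx P')))).
rewrite is_trig_block_mx // eqxx /=; apply/andP; split => //.
Qed.
End Trig.

Section FD.
Local Open Scope quotient_scope.
Lemma frac_decomp (R : idomainType) (x : {fraction R}) :
  exists a b : R, b != 0 /\ x * (FracField.tofrac b) = FracField.tofrac a.
Proof.
elim/quotW: x => r.
exists (r.1), (r.2); split; first exact: denom_ratioP.
unlock FracField.tofrac.
transitivity (\pi_({fraction R}) (FracField.mulf r (Ratio r.2 1))).
  exact: (esym (FracField.pi_mul _ _)).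
apply/eqmodP; rewrite /= FracField.equivfE /FracField.mulf.
rewrite !numden_Ratio ?oner_neq0 ?mulf_neq0 ?denom_ratioP ?oner_neq0 //.
by rewrite !mulr1 mulrC.
Qed.
End FD.

Section Zl.
Variable l : nat.
Local Notation q := (lbase l).
Local Notation Q := (Qm l).
Local Notation Z := (zl l).

Lemma q_prime : prime q. Proof. exact: lbase_prime. Qed.
Lemma q_gt1' : (1 < q)%N. Proof. exact: prime_gt1 q_prime. Qed.
Lemma Q_gt0 m : 0 < Q m.
Proof. by rewrite /Qm ltz_nat expn_gt0 prime_gt0 // q_prime. Qed.
Lemma Q_neq0 m : Q m != 0. Proof. by rewrite gt_eqF // Q_gt0. Qed.
Lemma QS m : Q m.+1 = Q m * q%:Z.
Proof. by rewrite /Qm expnS mulnC PoszM. Qed.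
Lemma Q1 : Q 1 = q%:Z. Proof. by rewrite /Qm expn1. Qed.

Lemma zseqD (x y : Z) m : zseq (x + y) m = ((zseq x m + zseq y m) %% Q m)%Z.
Proof. by []. Qed.
Lemma zseqM (x y : Z) m : zseq (x * y) m = ((zseq x m * zseq y m) %% Q m)%Z.
Proof. by []. Qed.
Lemma zseq1 m : zseq (1 : Z) m = (1 %% Q m)%Z.
Proof. by []. Qed.
Lemma zseq0' m : zseq (0 : Z) m = 0.
Proof. by rewrite /= mod0z. Qed.

Lemma zseq_nat (n : nat) m : zseq (n%:R : Z) m = ((n%:Z) %% Q m)%Z.
Proof.
elim: n => [|n IH]; first by rewrite zseq0' mod0z.
by rewrite mulrS zseqD IH zseq1 modzDm -PoszD add1n.
Qed.

Lemma zl_neq0_seq (x : Z) : x != 0 -> exists m, zseq x m != 0.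
Proof.
move=> nx; apply: contrapT => H; case/eqP: nx; apply: zl_eq => m.
rewrite zseq0'; apply/eqP/negPn/negP => hm; apply: H; exists m.
exact: hm.
Qed.

Local Notation p := (q%:R : Z).

Lemma zseq_pX (i : nat) (y : Z) : zseq (p ^+ i * y) i = 0.
Proof.
by rewrite zseqM -natrX zseq_nat /Qm modzz mul0r mod0z.
Qed.

Lemma p_not_unit : p \isn't a GRing.unit.
Proof.
apply/negP => /unitrPr [y /(congr1 (fun z => zseq z 1))].
rewrite zseqM zseq1 zseq_nat Q1 modzz mul0r mod0z modz_small //.
by rewrite ler01 /= ltz_nat q_gt1'.
Qed.

Lemma p_neq0 : p != 0.
Proof.
apply/eqP => /(congr1 (fun z => zseq z 2)); rewrite zseq_nat zseq0' modz_small.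
  by move/eqP; rewrite -Q1 (negPf (Q_neq0 1)).
by rewrite /Qm lez_nat ltz_nat leq0n /= -{1}(expn1 q) ltn_exp2l // q_gt1'.
Qed.

Lemma zdiv_p (x : Z) : zseq x 1 = 0 -> exists y, x = p * y.
Proof.
move=> x1.
have dv m : (q%:Z %| zseq x m.+1)%Z.
  apply/dvdz_mod0P; rewrite -Q1 -(zl_stab x (_ : 1 <= m.+1)%N) //.
pose f m := (zseq x m.+1 %/ q%:Z)%Z.
have fE m : f m * q%:Z = zseq x m.+1 by rewrite divzK.
have cf : compat l f.
  have qn0 : q%:Z != 0 by rewrite -Q1 Q_neq0.
  move=> m; apply/eqP; rewrite eqz_mod_dvd -(@dvdz_mul2r q%:Z _ _ qn0).
  rewrite mulrBl !fE -QS -eqz_mod_dvd; apply/eqP.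
  by rewrite [in LHS]zseqP modz_mod.
exists (mkz cf); apply: zl_eq => m.
rewrite zseqM zseq_nat /= modzMml modzMmr mulrC fE.
by rewrite -zseqP.
Qed.


Lemma zunit_p (x : Z) : zseq x 1 != 0 -> x \is a GRing.unit.
Proof.
move=> x1.
have cop m : coprimez (zseq x m) (Q m).
  case: m => [|m]; first by rewrite /Qm expn0 coprimezE /= coprimen1.
  rewrite coprimezE /Qm /= coprime_pexpr // coprime_sym prime_coprime ?q_prime //.
  apply: contra x1 => dv; rewrite (zl_stab x (_ : 1 <= m.+1)%N) // Q1.
  by apply/eqP/dvdz_mod0P; rewrite dvdzE.
pose f m := (egcdz (zseq x m) (Q m)).1.
have fE m : (Q m %| f m * zseq x m - 1)%Z.
  have g1 : gcdz (zseq x m) (Q m) = 1 by apply/eqP; exact: cop m.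
  rewrite /f; case: egcdzP => u v /= E _; rewrite -g1 -E opprD addrA subrr add0r rpredN.
  by apply: dvdz_mull; rewrite dvdzz.
have cf : compat l f.
  move=> m; apply/eqP; rewrite eqz_mod_dvd.
  have h1 := fE m; have h2 := fE m.+1.
  have h2' : (Q m %| f m.+1 * zseq x m.+1 - 1)%Z.
    by apply: dvdz_trans h2; rewrite QS dvdz_mulr.
  have h3 : (Q m %| zseq x m.+1 - zseq x m)%Z.
    by rewrite -eqz_mod_dvd; apply/eqP; rewrite [in RHS]zseqP modz_mod.
  have -> : f m - f m.+1 = f m.+1 * (f m * zseq x m - 1)
      - f m * (f m.+1 * zseq x m.+1 - 1) + f m * f m.+1 * (zseq x m.+1 - zseq x m).
    by ring.
  by rewrite rpredD ?rpredB // dvdz_mull.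
apply/unitrPr; exists (mkz cf); apply: zl_eq => m.
rewrite zseqM zseq1 /= modzMmr mulrC.
by apply/eqP; rewrite eqz_mod_dvd fE.
Qed.

Lemma zl_decomp (x : Z) : x != 0 -> exists i u, x = p ^+ i * u /\ u \is a GRing.unit.
Proof.
move=> nx; have [N xN] := zl_neq0_seq nx.
suff : (exists y, x = p ^+ N * y) \/ (exists i u, x = p ^+ i * u /\ u \is a GRing.unit).
  case => // -[y xy]; case/eqP: xN; by rewrite xy zseq_pX.
elim: N {xN} => [|N [[y xy]|H]]; [by left; exists x; rewrite expr0 mul1r| |by right].
have [y1|y1] := eqVneq (zseq y 1) 0.
  have [y' yE] := zdiv_p y1; left; exists y'; by rewrite xy yE exprSr mulrA.
by right; exists N, y; split => //; exact: zunit_p.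
Qed.

Lemma ql_root_unity (t : Ql l) k : (0 < k)%N -> t ^+ k = 1 ->
  exists z : Z, zl_to_ql z = t.
Proof.
move=> k0 tk.
have [a [b [b0 tb]]] := frac_decomp t.
have bF0 : FracField.tofrac b != 0 by rewrite tofrac_eq0.
have t0 : t != 0.
  apply/eqP => t0'; move: tk; rewrite t0' expr0n eqn0Ngt k0 /= => /esym/eqP; by rewrite oner_eq0.
have a0 : a != 0.
  apply: contraNneq t0 => a0'; move: tb; rewrite a0' tofrac0 => /eqP.
  by rewrite mulf_eq0 (negPf bF0) orbF.
have [i [u [au uu]]] := zl_decomp a0; have [j [w [bw wu]]] := zl_decomp b0.
have E : b ^+ k = a ^+ k.
  by apply/eqP; rewrite -tofrac_eq !tofracXn -tb exprMn tk mul1r.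
case: (leqP j i) => ji.
  exists (p ^+ (i - j) * u * w^-1); apply: (mulIf bF0).
  rewrite tb /zl_to_ql -tofracM; congr FracField.tofrac.
  rewrite au bw; set P := (q%:R : Z).
  have -> : P ^+ i = P ^+ (i - j) * P ^+ j by rewrite -exprD subnK.
  transitivity (P ^+ (i - j) * P ^+ j * u * (w^-1 * w)); first ring.
  by rewrite mulVr // mulr1.
exfalso.
move: E; rewrite bw au !exprMn -!exprM => E.
set d := ((j - i) * k)%N.
have d0 : (0 < d)%N by rewrite muln_gt0 subn_gt0 ji k0.
have jk : (j * k = i * k + d)%N by rewrite /d mulnBl subnKC // leq_mul // ltnW.
move: E; rewrite jk exprD -mulrA => /(mulfI (expf_neq0 _ p_neq0)) E.
have : u ^+ k \is a GRing.unit by exact: unitrX.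
rewrite -E -(prednK d0) exprS -mulrA unitrM => /andP [pu _].
by move: p_not_unit; rewrite pu.
Qed.

Lemma natq_neq0 (n : nat) : (0 < n)%N -> (n%:R : Ql l) != 0.
Proof.
move=> n0.
have -> : (n%:R : Ql l) = zl_to_ql n%:R by rewrite /zl_to_ql rmorph_nat.
rewrite /zl_to_ql tofrac_eq0; apply/eqP => /(congr1 (fun z => zseq z n)).
rewrite zseq_nat zseq0' modz_small; first by move=> [] n00; rewrite n00 in n0.
by rewrite lez_nat ltz_nat leq0n /Qm /= ltn_expl // q_gt1'.
Qed.

End Zl.

Section SplitSec.
Import Pdiv.Field.


Lemma irr_factor (F : fieldType) (p : {poly F}) : (1 < size p)%N ->
  exists q : {poly F}, (irreducible_poly q * (q \is monic))%type /\ q %| p.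
Proof.
elim: {p}(size p) {-2}p (leqnn (size p)) => [|m IH] p sp sp1.
  by move: (leq_trans sp1 sp).
have p0 : p != 0 by rewrite -size_poly_gt0 (ltn_trans _ sp1).
case: (pselect (irreducible_poly p)) => [Ip|NIp].
  have lc0 : (lead_coef p)^-1 != 0 by rewrite invr_eq0 lead_coef_eq0.
  exists ((lead_coef p)^-1 *: p); split; last by rewrite dvdpZl.
  split; last by apply/monicP; rewrite lead_coefZ mulVf // lead_coef_eq0.
  split; first by rewrite size_scale.
  move=> q sq; rewrite dvdpZr // => qp.
  apply: eqp_trans (Ip.2 q sq qp) _; rewrite eqp_sym; exact: eqp_scale.
have [q [sq [qp nqp]]] : exists q : {poly F}, [/\ size q != 1%N, q %| p & ~~ (q %= p)].
  apply: contra_notP NIp => H; split => // q sq qp.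
  apply/negPn/negP => nqp; apply: H; exists q; split => //; exact/negP.
have q0 : q != 0 by apply: contraNneq p0 => q0; move: qp; rewrite q0 dvd0p.
have sq1 : (1 < size q)%N.
  by rewrite ltn_neqAle eq_sym sq size_poly_gt0 q0.
have sqp : (size q < size p)%N.
  by rewrite ltn_neqAle dvdp_size_eqp // (negPf nqp) dvdp_leq.
have [r [Ir rq]] := IH q (leq_trans sqp sp) sq1.
by exists r; split => //; exact: dvdp_trans rq qp.
Qed.

Lemma split_ex m : forall (F : fieldType) (p : {poly F}), (size p <= m)%N ->
  p \is monic -> exists (L : fieldType) (f : {rmorphism F -> L}) (rs : seq L),
  map_poly f p = \prod_(x <- rs) ('X - x%:P).
Proof.
elim: m => [|m IH] F p sp mp.
  by move: (monic_neq0 mp); rewrite -size_poly_gt0 ltnNge sp.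
have [sp1|sp1] := leqP (size p) 1.
  have p1 : p = 1.
    have pc := size1_polyC sp1.
    by move/monicP: mp; rewrite pc lead_coefC => ->.
  exists F, idfun, [::]; by rewrite p1 rmorph1 big_nil.
have [q [hq qp]] := irr_factor sp1.
pose K : fieldType := {poly %/ q with hq}.
pose c : {rmorphism F -> K} := qpolyC q.
pose x : K := qpolyX q.
have rq : root (map_poly c q) x.
  have := in_qpoly_comp_horner q q 'X; rewrite comp_polyXr.
  have -> : in_qpoly q q = 0.
    by apply: val_inj => /=; rewrite mk_monicE // Pdiv.RingMonic.rmodpp // hq.2.
  by move=> E; apply/eqP; rewrite /x /qpolyX -E.
have rp : root (map_poly c p) x.
  by apply: root_dvdp rq; rewrite dvdp_map.
have [p' Ep'] := factor_theorem _ _ rp.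
have mp' : p' \is monic.
  by rewrite -(monicMr _ (monicXsubC x)) -Ep' map_monic.
have sp' : (size p' <= m)%N.
  have := size_map_poly c p; rewrite Ep' size_Mmonic ?monic_neq0 ?monicXsubC //.
  by rewrite size_XsubC addn2 /= => E; rewrite -ltnS E.
have [L [f' [rs' Hrs]]] := IH K p' sp' mp'.
exists L, (f' \o c)%FUN, (f' x :: rs').
by rewrite map_poly_comp Ep' rmorphM /= map_polyXsubC Hrs big_cons mulrC.
Qed.

End SplitSec.

Lemma trig_wtrig (R : comNzRingType) n (T : 'M[R]_n) :
  is_trig_mx T -> wtrig (fun i : 'I_n => nat_of_ord i) T.
Proof.
move/is_trig_mxP => HT i j ij; apply: contraR => H.
by rewrite HT // ltn_neqAle leqNgt H andbT; apply: contra ij => /eqP/val_inj ->.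
Qed.

Lemma mxtrace_map (F L : fieldType) (f : {rmorphism F -> L}) n (A : 'M[F]_n) :
  \tr (map_mx f A) = f (\tr A).
Proof. by rewrite /mxtrace rmorph_sum; apply: eq_bigr => i _; rewrite mxE. Qed.

Theorem lemma3p7 (l : nat) (n k : nat) (g : 'M[Ql l]_n) :
  prime l -> (0 < k)%N -> (k < n)%N -> g \in unitmx ->
  (unipotent (wedge k g) <->
   exists gamma : zl l, gamma ^+ k = 1 /\ unipotent (zl_to_ql gamma *: g)).
Proof.
move=> pl k0 kn gu.
have [L [f [rs Hrs]]] := split_ex (leqnn _) (char_poly_monic g).
have Hrs' : char_poly (map_mx f g) = \prod_(x <- rs) ('X - x%:P) by rewrite -map_char_poly.
have [P Pu Ptrig] := trig_split Hrs'.
set T := P *m map_mx f g *m invmx P in Ptrig.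
pose d i := T i i.
have K1 c : unipotent (c *: g) <-> forall i, f c * d i = 1.
  rewrite -(unipotent_map f) -(unipotent_conjE _ Pu) map_mxZ.
  have -> : P *m (f c *: map_mx f g) *m invmx P = f c *: T by rewrite /T -scalemxAr -scalemxAl.
  rewrite (unipotent_wtrig (trig_wtrig _)); last first.
    by apply/is_trig_mxP => i j ij; rewrite mxE (is_trig_mxP Ptrig i j ij) mulr0.
  by split => H i; move: (H i); rewrite mxE.
have K2 : unipotent (wedge k g) <-> forall S : ksub n k, \prod_(x in val S) d x = 1.
  rewrite -(unipotent_map f) wedge_map.
  have [WPu WE] := @wedge_conj _ n k P (map_mx f g) Pu.
  rewrite -(unipotent_conjE _ WPu) -WE -/T (unipotent_wtrig (wedge_trig Ptrig)).
  split => H.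
    by move=> S; have := H (enum_rank S); rewrite (wedge_trig_diag Ptrig) enum_rankK.
  by move=> I; rewrite (wedge_trig_diag Ptrig) H.
rewrite K2; split; last first.
  case=> γ [γk /K1 Hγ] S.
  set c := f (zl_to_ql γ).
  have ck : c ^+ k = 1 by rewrite -rmorphXn /zl_to_ql -tofracXn γk tofrac1 rmorph1.
  have : \prod_(x in val S) (c * d x) = 1 by rewrite big1.
  by rewrite big_split /= prodr_const (eqP (valP S)) ck mul1r.
move=> H.
have Hd i j : d i = d j.
  have [<-|ij] := eqVneq i j; first done.
  have cC : (k.-1 <= #|~: [set i; j]|)%N.
    have := cardsC [set i; j]; rewrite cards2 ij card_ord => E; lia.
  have [U [sU cU]] := exists_subset cC.
  have iU : i \notin U by apply/negP => /(subsetP sU); rewrite !inE eqxx.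
  have jU : j \notin U by apply/negP => /(subsetP sU); rewrite !inE eqxx orbT.
  have c1 : #|i |: U| == k by rewrite cardsU1 iU cU /=; apply/eqP; lia.
  have c2 : #|j |: U| == k by rewrite cardsU1 jU cU /=; apply/eqP; lia.
  have E1 := H (exist _ (i |: U) c1); have E2 := H (exist _ (j |: U) c2).
  rewrite /= big_setU1 //= in E1; rewrite /= big_setU1 //= in E2.
  have PU : \prod_(x in U) d x != 0.
    by apply/eqP => P0; move: E1; rewrite P0 mulr0 => /eqP; rewrite eq_sym oner_eq0.
  by apply: (mulIf PU); rewrite E1 E2.
pose i0 : 'I_n := Ordinal (ltn_trans k0 kn).
set lam := d i0.
have lk : lam ^+ k = 1.
  have cT : (k <= #|[set: 'I_n]|)%N by rewrite cardsT card_ord ltnW.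
  have [S0 [_ cS0]] := exists_subset cT.
  have := H (exist _ S0 (introT eqP cS0)); rewrite /=.
  under eq_bigr do rewrite (Hd _ i0).
  by rewrite prodr_const cS0.
have trT : \tr T = f (\tr g).
  by rewrite /T mxtrace_mulC mulmxA mulVmx // mul1mx mxtrace_map.
have trd : \tr T = lam *+ n.
  rewrite /mxtrace; under eq_bigr do rewrite -/(d _) (Hd _ i0).
  by rewrite sumr_const card_ord.
have n0 : (n%:R : L) != 0.
  by rewrite -(rmorph_nat f) fmorph_eq0 natq_neq0 // (ltn_trans k0 kn).
pose t := \tr g / n%:R.
have ft : f t = lam.
  by rewrite fmorph_div rmorph_nat -trT trd -mulr_natr mulfK.
have tk : t ^+ k = 1 by apply: (fmorph_inj f); rewrite rmorphXn ft lk rmorph1.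
have [z zt] := ql_root_unity k0 tk.
have zk : z ^+ k = 1.
  by apply/eqP; rewrite -tofrac_eq tofracXn tofrac1; move: zt; rewrite /zl_to_ql => ->; rewrite tk.
exists (z ^+ k.-1); split; first by rewrite -exprM mulnC exprM zk expr1n.
apply/K1 => i.
rewrite /zl_to_ql tofracXn -/(zl_to_ql z) zt rmorphXn ft (Hd i i0) -exprSr prednK //.
Qed.
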